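(* Let $d,N\ge 1$ be integers, let $\mathbb{K},\mathbb{M}$ be real skew-symmetric $d\times d$ matrices, let $S:\mathbb{R}^d\to\mathbb{R}$ be smooth, and let $\mathcal{D}_h$ be a real skew-symmetric $N\times N$ matrix; put $\mathcal{C}_h=\mathcal{D}_h\otimes\mathbb{I}_d$. Let $z_h(t)\in\mathbb{R}^{dN}$ be a differentiable solution of $$(\mathbb{I}_N\otimes\mathbb{K})\,\frac{dz_h}{dt}(t)+(\mathcal{D}_h\otimes\mathbb{M})\,z_h(t)=\nabla\widetilde S_h\big(z_h(t)\big),$$ where $\widetilde S_h(z)=\sum_{j=0}^{N-1}S(z_j)$ for $z=(z_0,\dots,z_{N-1})$, $z_j\in\mathbb{R}^d$. Define $$\mathcal{I}_h(t)=\tfrac12\, z_h(t)^{\top}(\mathcal{D}_h\otimes\mathbb{K})\,z_h(t),\qquad \mathfrak{M}_h(t)=\widetilde S_h\big(z_h(t)\big)-\tfrac12\, z_h(t)^{\top}(\mathbb{I}_N\otimes\mathbb{K})\,\frac{dz_h}{dt}(t).$$ Then $$\frac{d\mathcal{I}_h}{dt}+\nabla_h\mathfrak{M}_h=0,$$ where $\nabla_h$ is the discrete spatial derivative described in the context.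
   Context: $\otimes$ is the Kronecker product, $\mathbb{I}_n$ the $n\times n$ identity. The discrete gradient is defined for smooth $Q:\mathbb{R}^{dN}\to\mathbb{R}$ by $\nabla_h Q(z)=\nabla Q(z)^{\top}\mathcal{C}_h z$ (chain rule with $\partial_x$ of the state replaced by $\mathcal{C}_h z$); for a quantity also involving $\dot z=dz_h/dt$, each occurrence of the state (including in $\dot z$) is differentiated this way, so explicitly $\nabla_h\mathfrak{M}_h=\nabla\widetilde S_h(z_h)^{\top}\mathcal{C}_h z_h-\tfrac12(\mathcal{C}_h z_h)^{\top}(\mathbb{I}_N\otimes\mathbb{K})\dot z_h-\tfrac12 z_h^{\top}(\mathbb{I}_N\otimes\mathbb{K})\,\mathcal{C}_h\dot z_h$. *)

(* Defs.v *)
From HB Require Import structures.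
From mathcomp Require Import all_boot all_order all_algebra.
From mathcomp Require Import all_classical all_reals all_analysis.
From mathcomp Require Export mxtens.
Set Implicit Arguments.
Unset Strict Implicit.
Unset Printing Implicit Defensive.
Import Order.TTheory GRing.Theory Num.Theory.
Import numFieldNormedType.Exports.
Local Open Scope ring_scope.

(* Vectors of R^n are column vectors 'cV[R]_n.  The Kronecker product is
   mathcomp's [tensmx] (notation A *t B), with the standard row-major
   index convention (i,k) |-> i * p + k  (mxtens_index). *)

Definition basis_vec {R : realType} {n : nat} (i : 'I_n) : 'cV[R]_n :=
  delta_mx i 0.

Definition grad {R : realType} {n : nat} (f : 'cV[R]_n -> R) (x : 'cV[R]_n)
  : 'cV[R]_n := \col_(i < n) ('D_(basis_vec i) f x).

Definition iter_dir {R : realType} {n : nat} (vs : seq 'cV[R]_n)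
  (f : 'cV[R]_n -> R) : 'cV[R]_n -> R :=
  foldr (fun v g => fun x => 'D_v g x) f vs.

Definition smooth {R : realType} {n : nat} (f : 'cV[R]_n -> R) : Prop :=
  forall vs : seq 'cV[R]_n,
    continuous (iter_dir vs f) /\
    (forall (x v : 'cV[R]_n), derivable (iter_dir vs f) x v).

Definition block {R : realType} {N d : nat} (z : 'cV[R]_(N * d)) (j : 'I_N)
  : 'cV[R]_d := \col_(k < d) z (mxtens_index (j, k)) 0.

Definition Stilde {R : realType} {N d : nat} (S : 'cV[R]_d -> R)
  (z : 'cV[R]_(N * d)) : R := \sum_(j < N) S (block z j).

Definition sc {R : realType} (A : 'M[R]_1) : R := A 0 0.

(* Main.v *)
Require Import Defs.
From HB Require Import structures.
From mathcomp Require Import all_boot all_order all_algebra.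
From mathcomp Require Import all_classical all_reals all_analysis.
From mathcomp Require Import mxtens ring lra.
Import Order.TTheory GRing.Theory Num.Theory.
Import numFieldNormedType.Exports.
Local Open Scope ring_scope.

Lemma coord_derive (R : realType) n (f : R -> 'cV[R]_n) t i :
  derivable f t 1 -> is_derive t 1 (fun s => f s i 0) (derive1 f t i 0).
Proof.
move=> hf.
have hi : derivable (fun s => f s i 0) t 1 by move/derivable_mxP: hf; apply.
apply: DeriveDef => //.
by rewrite derive1E derive_mx // mxE.
Qed.

Lemma quad_derive (R : realType) n (Q : 'M[R]_n) (f : R -> 'cV[R]_n) t :
  derivable f t 1 ->
  is_derive t 1 (fun s => sc ((f s)^T *m Q *m f s))
    (sc ((derive1 f t)^T *m Q *m f t) + sc ((f t)^T *m Q *m derive1 f t)).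
Proof.
move=> hf.
have E : forall g h : 'cV[R]_n, sc (g^T *m Q *m h) =
   \sum_(i < n) \sum_(j < n) g i 0 * Q i j * h j 0.
  move=> g h; rewrite /sc mxE exchange_big; apply: eq_bigr => j _; rewrite mxE mulr_suml.
  by apply: eq_bigr => i _; rewrite mxE.
set f' := derive1 f t.
have T : forall i j, is_derive t 1 (fun s => f s i 0 * Q i j * f s j 0)
    (f' i 0 * Q i j * f t j 0 + f t i 0 * Q i j * f' j 0).
  move=> i j.
  have h1 := @coord_derive _ _ f t i hf; have h2 := @coord_derive _ _ f t j hf.
  have h3 : is_derive t 1 (Q i j \*: (fun s => f s j 0)) (Q i j *: f' j 0) by apply: is_deriveZ.
  have := is_deriveM h1 h3.
  have -> : ((fun s => f s i 0) * (Q i j \*: (fun s => f s j 0))) =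
     (fun s => f s i 0 * Q i j * f s j 0).
    by apply: funext => s /=; rewrite /= mulrA.
  move=> H; apply: is_derive_eq H _.
  rewrite /= /GRing.scale /=; ring.
have -> : (fun s => sc ((f s)^T *m Q *m f s)) =
   \sum_(i < n) \sum_(j < n) (fun s => f s i 0 * Q i j * f s j 0).
  rewrite fct_sumE; apply: funext => s; rewrite E; apply: eq_bigr => i _.
  by rewrite fct_sumE.
apply: is_derive_eq.
rewrite !E -big_split /=; apply: eq_bigr => i _; rewrite -big_split //.
Qed.

Lemma tensNmx (R : realType) m n p q (A : 'M[R]_(m,n)) (B : 'M[R]_(p,q)) :
  (- A) *t B = - (A *t B).
Proof. by apply/matrixP => i j; rewrite !mxE mulNr. Qed.
Lemma tensmxN (R : realType) m n p q (A : 'M[R]_(m,n)) (B : 'M[R]_(p,q)) :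
  A *t (- B) = - (A *t B).
Proof. by apply/matrixP => i j; rewrite !mxE mulrN. Qed.
Lemma scN (R : realType) (A : 'M[R]_1) : sc (- A) = - sc A.
Proof. by rewrite /sc mxE. Qed.
Lemma scD (R : realType) (A B : 'M[R]_1) : sc (A + B) = sc A + sc B.
Proof. by rewrite /sc mxE. Qed.
Lemma scT (R : realType) (A : 'M[R]_1) : sc (A^T) = sc A.
Proof. by rewrite /sc mxE. Qed.
Lemma sc_swap (R : realType) n (P : 'M[R]_n) (x y : 'cV[R]_n) :
  sc (x^T *m P *m y) = sc (y^T *m P^T *m x).
Proof. by rewrite -scT !trmx_mul trmxK mulmxA. Qed.
Lemma sc_skew (R : realType) n (P : 'M[R]_n) (x : 'cV[R]_n) :
  P^T = - P -> sc (x^T *m P *m x) = 0.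
Proof.
move=> hP; have := @sc_swap _ _ P x x; rewrite hP mulmxN mulNmx scN => h.
have : 2 * sc (x^T *m P *m x) = 0 by rewrite mulr2n mulrDl mul1r {1}h addNr.
by move/eqP; rewrite mulf_eq0 pnatr_eq0 /= => /eqP.
Qed.

Theorem theorem3 (R : realType) (d N : nat) (hd : (0 < d)%N) (hN : (0 < N)%N)
  (K M : 'M[R]_d) (hK : K^T = - K) (hM : M^T = - M)
  (S : 'cV[R]_d -> R) (hS : smooth S)
  (D : 'M[R]_N) (hD : D^T = - D)
  (z : R -> 'cV[R]_(N * d))
  (hz : forall t : R, derivable z t 1)
  (hode : forall t : R,
     (1%:M *t K) *m derive1 z t + (D *t M) *m z t = grad (Stilde S) (z t)) :
  let C := D *t (1%:M : 'M[R]_d) in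
  let I := fun t : R => 2^-1 * sc ((z t)^T *m (D *t K) *m z t) in
  let nablaM := fun t : R =>
      sc ((grad (Stilde S) (z t))^T *m (C *m z t))
      - 2^-1 * sc ((C *m z t)^T *m ((1%:M : 'M[R]_N) *t K) *m derive1 z t)
      - 2^-1 * sc ((z t)^T *m ((1%:M : 'M[R]_N) *t K) *m (C *m derive1 z t)) in
  forall t : R, derivable I t 1 /\ derive1 I t + nablaM t = 0.
Proof.
move=> C I nablaM t.
have hq := @quad_derive _ _ (D *t K) z t (hz t).
have hI : is_derive t 1 I (2^-1 *: (sc ((derive1 z t)^T *m (D *t K) *m z t)
    + sc ((z t)^T *m (D *t K) *m derive1 z t))).
  have -> : I = 2^-1 \*: (fun s => sc ((z s)^T *m (D *t K) *m z s)) by [].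
  exact: is_deriveZ.
have [hI1 hI2] := hI.
split; first exact: hI1.
rewrite derive1E hI2 /nablaM -hode.
set w := derive1 z t; set x := z t.
set A := (1%:M : 'M[R]_N) *t K.
have QT : (D *t K)^T = D *t K by rewrite trmx_tens hD hK tensNmx tensmxN opprK.
have CA : C *m A = D *t K by rewrite tensmx_mul mulmx1 mul1mx.
have AC : A *m C = D *t K by rewrite tensmx_mul mulmx1 mul1mx.
have CT : C^T = - C by rewrite trmx_tens hD trmx1 tensNmx.
have AT : A^T = - A by rewrite trmx_tens hK trmx1 tensmxN.
have PT : ((D *t M)^T *m C)^T = - ((D *t M)^T *m C).
  rewrite trmx_mul trmxK CT.
  rewrite (mulNmx C) /C trmx_tens hD hM !tensmx_mul (mulNmx D) (mulNmx M) (mulmx1 M) (mul1mx M).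
  by rewrite tensNmx tensmxN opprK.
have e1 : sc (w^T *m (D *t K) *m x) = sc (x^T *m (D *t K) *m w).
  by rewrite sc_swap QT.
have e2 : sc ((C *m x)^T *m A *m w) = - sc (x^T *m (D *t K) *m w).
  by rewrite trmx_mul CT (mulmxN x^T C) (mulNmx (x^T *m C)) (mulNmx (x^T *m C *m A)) scN -(mulmxA x^T) CA.
have e3 : sc (x^T *m A *m (C *m w)) = sc (x^T *m (D *t K) *m w).
  by rewrite mulmxA -(mulmxA _ A) AC.
have e4 : sc ((A *m w + (D *t M) *m x)^T *m (C *m x)) = - sc (x^T *m (D *t K) *m w).
  rewrite raddfD /= mulmxDl scD !trmx_mul mulmxA.
  rewrite [X in _ + sc X](_ : _ = x^T *m ((D *t M)^T *m C) *m x); last by rewrite !mulmxA.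
  rewrite sc_skew // addr0 AT (mulmxN w^T A) (mulNmx (w^T *m A)) (mulNmx (w^T *m A *m C)) scN -(mulmxA w^T) AC sc_swap QT.
  done.
rewrite e1 e2 e3 e4 /GRing.scale /=.
set X := sc _. lra.
Qed.
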